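(* Let $G$ be a simple graph, let $S_1$ be a $k$-simplicial set of $G$, let $S_1,\ldots,S_r$ be the parts of the complete multipartite graph $G_{N_G[S_1]}$, and let $G'_i=G\setminus N_G[S_i]$ for $i=1,\ldots,r$. Then $G$ is $k$-shellable if and only if $G'_i$ is $k$-shellable for all $i=1,\ldots,r$.
   Context: $N_G(x)$ is the set of neighbours of $x$, $N_G[x]=N_G(x)\cup\{x\}$, $N_G[U]=\bigcup_{x\in U}N_G[x]$; $G\setminus U$ deletes the vertices of $U$ and incident edges; $G_U$ is the induced subgraph on $U$. A set $S$ of pairwise non-adjacent vertices of $G$ is a $k$-simplicial set if $G_{N_G[S]}$ is a complete $r$-partite graph with $k$-element parts $S_1,\ldots,S_r$ such that for every part $S_l$ and every two vertices $x_i,x_j\in S_l$, $N_G(x_i)=N_G(x_j)$. A graph $H$ is $k$-shellable if its independence complex $\Delta_H$ (faces: sets of pairwise non-adjacent vertices) is. $\langle F_1,\ldots,F_s\rangle$ denotes the complex with facets $F_1,\dots,F_s$. A complex $\Gamma$ of dimension $d$ is $k$-shellable ($1\le k\le d+1$) if its facets can be ordered $F_1,\ldots,F_r$ such that for every $j=2,\ldots,r$, $\Gamma_j=\langle F_j\rangle\cap\langle F_1,\ldots,F_{j-1}\rangle$ satisfies (i) $\Gamma_j$ is generated by a nonempty set of faces of $\langle F_j\rangle$ of dimension $|F_j|-k-1$; (ii) if $\Gamma_j$ has more than one facet, then for every two distinct facets $\sigma,\tau$ of $\Gamma_j$, $F_j\subseteq\sigma\cup\tau$. *)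

(* Defs.v *)
(* A simple graph is a symmetric irreflexive relation e on a
   finType T; subgraphs are induced subgraphs on vertex sets V : {set T}. *)
From mathcomp Require Import all_boot.
Set Implicit Arguments. Unset Strict Implicit. Unset Printing Implicit Defensive.

Section Defs.
Variable T : finType.

Definition openN (e : rel T) (x : T) : {set T} := [set y | e x y].

Definition closedN (e : rel T) (U : {set T}) : {set T} :=
  [set y | [exists x in U, (x == y) || e x y]].

Definition indep (e : rel T) (F : {set T}) : bool :=
  [forall x in F, forall y in F, ~~ e x y].

Definition indcomplex (e : rel T) (V : {set T}) : {set {set T}} :=
  [set F : {set T} | (F \subset V) && indep e F].

Definition facets (D : {set {set T}}) : {set {set T}} :=
  [set F in D | [forall G in D, (F \subset G) ==> (G == F)]].

Definition gen_seq (s : seq {set T}) : {set {set T}} :=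
  [set A : {set T} | has (fun F : {set T} => A \subset F) s].

Definition gen_set (L : {set {set T}}) : {set {set T}} :=
  [set A : {set T} | [exists F in L, A \subset F]].

Definition kshellable (k : nat) (D : {set {set T}}) : Prop :=
  (1 <= k)%N /\
  exists s : seq {set T},
    [/\ uniq s, [set F in s] = facets D &
     forall j : nat, (1 <= j < size s)%N ->
       let Fj := nth set0 s j in
       let Gam := gen_seq [:: Fj] :&: gen_seq (take j s) in
       (* (i) generated by a nonempty set of faces of <Fj> of dimension |Fj|-k-1 *)
       (exists L : {set {set T}},
          [/\ L != set0,
              (forall A, A \in L -> (A \subset Fj) /\ (#|A| + k = #|Fj|)%N) &
              Gam = gen_set L]) /\
       ((1 < #|facets Gam|)%N ->
          forall sg tau, sg \in facets Gam -> tau \in facets Gam -> sg != tau ->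
            Fj \subset sg :|: tau)].

Definition kshellable_graph (k : nat) (e : rel T) (V : {set T}) : Prop :=
  kshellable k (indcomplex e V).

(* S is a k-simplicial set of G = (T, e), and P = {S_1, ..., S_r} is the set
   of parts of the complete multipartite graph G_{N_G[S]} witnessing it. *)
Definition ksimplicial_parts (e : rel T) (k : nat) (S : {set T})
    (P : {set {set T}}) : Prop :=
  [/\ indep e S,
      partition P (closedN e S),
      (forall B, B \in P -> #|B| = k),
      (forall x y, x \in closedN e S -> y \in closedN e S ->
         e x y = (pblock P x != pblock P y)) &
      (forall B x y, B \in P -> x \in B -> y \in B -> openN e x = openN e y)].

Definition ksimplicial (e : rel T) (k : nat) (S : {set T}) : Prop :=
  exists P, ksimplicial_parts e k S P.

End Defs.

(* Main.v *)
Require Import Defs.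
From mathcomp Require Import all_boot.
From Stdlib Require Import Lia.
From mathcomp Require Import zify.
Set Implicit Arguments. Unset Strict Implicit. Unset Printing Implicit Defensive.

Section Gen.
Variable T : finType.
Implicit Types (A B C F H : {set T}) (s p q : seq {set T}) (L D : {set {set T}}).

Lemma in_gen_seq A s : (A \in gen_seq s) = has (fun F => A \subset F) s.
Proof. by rewrite inE. Qed.

Lemma in_gen_set A L : reflect (exists2 F, F \in L & A \subset F) (A \in gen_set L).
Proof. rewrite inE; exact: (iffP exists_inP) => -[F]; exists F. Qed.

Lemma gen_set_down A B L : A \subset B -> B \in gen_set L -> A \in gen_set L.
Proof. move=> AB /in_gen_set [F FL BF]; apply/in_gen_set; exists F => //; exact: subset_trans BF. Qed.

Lemma facetsP D F : reflect (F \in D /\ forall G, G \in D -> F \subset G -> G = F) (F \in facets D).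
Proof.
rewrite inE; apply: (iffP andP) => [[FD /forall_inP H]|[FD H]]; split => //.
  by move=> G GD FG; apply/eqP; exact: (implyP (H G GD)).
by apply/forall_inP => G GD; apply/implyP => FG; rewrite (H G GD FG).
Qed.

Lemma facets_gen_set L F : F \in facets (gen_set L) -> F \in L.
Proof.
case/facetsP => /in_gen_set [G GL FG] H.
have : G \in gen_set L by apply/in_gen_set; exists G.
by move/H => /(_ FG) <-.
Qed.

Lemma facet_exists D A : A \in D -> exists2 F, F \in facets D & A \subset F.
Proof.
move=> AD; have [F /maxsetP [FD Fmax] AF] := maxset_exists (P := mem D) AD.
exists F => //; apply/facetsP; split => // G GD FG; exact: Fmax.
Qed.

Definition CondG k F (Gam : {set {set T}}) :=
  (exists L : {set {set T}},
     [/\ L != set0,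
         (forall A, A \in L -> (A \subset F) /\ (#|A| + k = #|F|)%N) &
         Gam = gen_set L]) /\
  ((1 < #|facets Gam|)%N ->
     forall sg tau, sg \in facets Gam -> tau \in facets Gam -> sg != tau ->
       F \subset sg :|: tau).

Definition Cond k F p := CondG k F (gen_seq [:: F] :&: gen_seq p).

Definition shellseq k s :=
  forall p F q, s = p ++ F :: q -> p != [::] -> Cond k F p.

Lemma kshellableE k D :
  kshellable k D <-> (1 <= k)%N /\ exists s, [/\ uniq s, [set F in s] = facets D & shellseq k s].
Proof.
split => -[k1 [s [us sD H]]]; split => //; exists s; split => //.
  move=> p F q sE pn; have := H (size p).
  have -> : nth set0 s (size p) = F by rewrite sE nth_cat ltnn subnn.
  have -> : take (size p) s = p by rewrite sE take_size_cat.
  apply; rewrite sE size_cat /=; move: pn; rewrite -size_eq0 => pn; by rewrite lt0n pn /= -addSnnS leq_addr.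
move=> j /andP [j1 js].
have E : s = take j s ++ nth set0 s j :: drop j.+1 s by rewrite -drop_nth // cat_take_drop.
apply: (H _ _ _ E); rewrite -size_eq0 size_take js; lia.
Qed.

Lemma shellseq_rcons k s F :
  shellseq k (rcons s F) <-> shellseq k s /\ (s != [::] -> Cond k F s).
Proof.
split.
  move=> H; split; last by move=> sn; apply: (H s F [::]) => //; rewrite cats1.
  by move=> p G q sE pn; apply: (H p G (rcons q F)) => //; rewrite sE rcons_cat.
move=> [H1 H2] p G q; case/lastP: q => [|q x].
  rewrite cats1 => /rcons_inj [sE GE]; subst; exact: H2.
rewrite -rcons_cons -rcons_cat => /rcons_inj [sE GE]; subst; exact: H1.
Qed.

Lemma shellseq_nil k : shellseq k [::].
Proof. by move=> [|? ?] ? ?. Qed.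

End Gen.

Section Restrict.
Variable T : finType.
Implicit Types (A B C F H : {set T}) (s p q : seq {set T}) (L D : {set {set T}}).

Lemma setUDK' A B : A \subset B -> A :|: (B :\: A) = B.
Proof.
move=> AB; apply/setP => x; rewrite !inE; case xA: (x \in A) => //=.
by rewrite (subsetP AB x xA).
Qed.

Lemma setUDl' A B : [disjoint B & A] -> (A :|: B) :\: A = B.
Proof. by move=> d; rewrite setDUl setDv set0U; apply/setDidPl. Qed.

Lemma in_gam F p C : (C \in gen_seq [:: F] :&: gen_seq p) = (C \subset F) && has (fun G : {set T} => C \subset G) p.
Proof. by rewrite !inE /= orbF. Qed.

Lemma cond_restrict k (Si : {set T}) F p :
  #|Si| = k -> (0 < k)%N -> Si \subset F -> has (fun G : {set T} => Si \subset G) p ->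
  Cond k F p ->
  Cond k (F :\: Si) [seq G :\: Si | G : {set T} <- [seq G : {set T} <- p | Si \subset G]].
Proof.
move=> cS k0 SiF hp [[L [Ln LP GE]] Hii].
rewrite /Cond.
set p' := [seq G :\: Si | G <- _].
have memG' : forall B, B \in gen_seq [:: F :\: Si] :&: gen_seq p' =
    (B \subset F :\: Si) && (Si :|: B \in gen_seq [:: F] :&: gen_seq p).
  move=> B; rewrite !in_gam; case BF: (B \subset F :\: Si) => //=.
  move: BF; rewrite subsetD => /andP [BF dB].
  rewrite subUset SiF BF /= has_map; apply/hasP/hasP => -[G].
    rewrite mem_filter /= => /andP [SiG Gp]; rewrite subsetD => /andP [BG _].
    by exists G => //; rewrite subUset SiG BG.
  move=> Gp; rewrite subUset => /andP [SiG BG]; exists G.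
    by rewrite mem_filter SiG.
  by rewrite /= subsetD BG dB.
set L' := (fun A => A :\: Si) @: [set A in L | Si \subset A].
have GE' : gen_seq [:: F :\: Si] :&: gen_seq p' = gen_set L'.
  apply/setP => B; rewrite memG' GE; apply/andP/in_gen_set.
    move=> [BF /in_gen_set [A AL SBA]]; exists (A :\: Si).
      by apply: imset_f; rewrite inE AL; move: SBA; rewrite subUset => /andP [].
    move: BF SBA; rewrite subsetD subUset => /andP [_ dB] /andP [_ BA].
    by rewrite subsetD BA dB.
  move=> [A' /imsetP [A]]; rewrite inE => /andP [AL SiA] -> BA; split.
    by apply: subset_trans BA _; apply: setSD; case: (LP A AL).
  apply/in_gen_set; exists A => //; rewrite subUset SiA.
  by move: BA; rewrite subsetD => /andP [].
split.
  exists L'; split => //.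
  - apply/set0Pn.
    have : set0 \in gen_set L'.
      rewrite -GE' memG' sub0set setU0 in_gam SiF /=.
      exact: hp.
    by case/in_gen_set => A AL _; exists A.
  - move=> A' /imsetP [A]; rewrite inE => /andP [AL SiA] ->.
    case: (LP A AL) => AF cA; split; first exact: setSD.
    rewrite !cardsD (setIidPr SiA) (setIidPr (subset_trans SiA AF)).
    have := subset_leq_card SiA; lia.
move=> _ s' t' sF tF st.
have lift : forall sg, sg \in facets (gen_seq [:: F :\: Si] :&: gen_seq p') ->
    Si :|: sg \in facets (gen_seq [:: F] :&: gen_seq p).
  move=> sg /facetsP [sG smax]; move: (sG); rewrite memG' => /andP [sgF SsG].
  apply/facetsP; split => // C CG SC.
  have CF : C \subset F by move: CG; rewrite in_gam => /andP [].
  have SiC : Si \subset C by move: SC; rewrite subUset => /andP [].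
  have CG' : C :\: Si \in gen_seq [:: F :\: Si] :&: gen_seq p'.
    by rewrite memG' setSD //= setUDK'.
  have := smax _ CG'; rewrite subsetD.
  move: SC sgF; rewrite subUset subsetD => /andP [_ ->] /andP [_ ->] /(_ isT) <-.
  by rewrite setUDK'.
have dS : forall sg, sg \in facets (gen_seq [:: F :\: Si] :&: gen_seq p') -> [disjoint sg & Si].
  move=> sg /facetsP [sG _]; move: sG; rewrite memG' subsetD => /andP [/andP [_ ->]].
  done.
have st' : Si :|: s' != Si :|: t'.
  apply: contra st => /eqP E; apply/eqP.
  by rewrite -(setUDl' (dS _ sF)) E setUDl' // dS.
have c1' : (1 < #|facets (gen_seq [:: F] :&: gen_seq p)|)%N.
  apply/card_gt1P; exists (Si :|: s'), (Si :|: t'); split => //; exact: lift.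
have := Hii c1' _ _ (lift _ sF) (lift _ tF) st'.
move/subsetP => Hs; apply/subsetP => x; rewrite inE => /andP [xSi xF].
by move: (Hs x xF); rewrite !inE (negbTE xSi).
Qed.

End Restrict.

Section Extend.
Variable T : finType.
Implicit Types (A B C F H X : {set T}) (s p q : seq {set T}) (L D : {set {set T}}).

Lemma cardU_dis A B : [disjoint A & B] -> #|A :|: B| = (#|A| + #|B|)%N.
Proof. by move=> d; rewrite cardsU (disjoint_setI0 d) cards0 subn0. Qed.

Lemma cond_extend k (Sj H : {set T}) (a q : seq {set T}) :
  #|Sj| = k -> (0 < k)%N -> [disjoint Sj & H] ->
  (forall G, G \in a -> [disjoint Sj & G]) ->
  (a != [::] -> has (fun G : {set T} => H \subset G) a) ->
  (a ++ [seq Sj :|: G | G : {set T} <- q] != [::]) ->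
  (q != [::] -> Cond k H q) ->
  Cond k (Sj :|: H) (a ++ [seq Sj :|: G | G : {set T} <- q]).
Proof.
move=> cS k0 dSH hdis hcov hne hq.
have [L' [L'n L'P GE' Hii']] : exists L' : {set {set T}},
   [/\ q != [::] -> L' != set0,
       (forall A, A \in L' -> A \subset H /\ (#|A| + k = #|H|)%N),
       gen_seq [:: H] :&: gen_seq q = gen_set L' &
       ((1 < #|facets (gen_seq [:: H] :&: gen_seq q)|)%N ->
        forall sg tau, sg \in facets (gen_seq [:: H] :&: gen_seq q) ->
          tau \in facets (gen_seq [:: H] :&: gen_seq q) -> sg != tau ->
          H \subset sg :|: tau)].
  case qn: (q == [::]).
    move/eqP: qn => ->.
    have E : gen_seq [:: H] :&: gen_seq [::] = set0.
      by apply/setP => C; rewrite in_gam /= andbF inE.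
    exists set0; split => //.
    - by move=> A; rewrite inE.
    - rewrite E; apply/setP => C; rewrite inE; apply/esym/negbTE/negP.
      by case/in_gen_set => ?; rewrite inE.
    - by rewrite E => _ sg tau /facetsP []; rewrite inE.
  have [[L' [L'n L'P GE']] Hii'] := hq (negbT qn).
  by exists L'.
set F := Sj :|: H.
set Gam' := gen_seq [:: H] :&: gen_seq q.
have memG : forall C, (C \in gen_seq [:: F] :&: gen_seq (a ++ [seq Sj :|: G | G : {set T} <- q])) =
    (C \subset F) && ((a != [::]) && (C \subset H) || (C :\: Sj \in Gam')).
  move=> C; rewrite !in_gam has_cat has_map.
  case CF: (C \subset F) => //=; congr (_ || _).
    apply/hasP/andP => [[G Ga CG]|[an CH]].
      split; first by apply/eqP => a0; rewrite a0 in Ga.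
      apply/subsetP => x xC; have := subsetP CF x xC; rewrite inE; case/orP => // xS.
      by move/(disjointFr (hdis G Ga)): xS; rewrite (subsetP CG x xC).
    have [G Ga HG] := hasP (hcov an); exists G => //; exact: subset_trans CH HG.
  by rewrite subDset CF /=; apply: eq_has => G; rewrite /= subDset.
set L := [set X | (a != [::]) && (X == H)] :|: (fun A => Sj :|: A) @: L'.
have GE : gen_seq [:: F] :&: gen_seq (a ++ [seq Sj :|: G | G : {set T} <- q]) = gen_set L.
  apply/setP => C; rewrite memG /Gam' GE'; apply/idP/in_gen_set.
    move=> /andP [CF /orP [/andP [an CH] | /in_gen_set [A AL CA]]].
      by exists H => //; rewrite !inE an eqxx.
    exists (Sj :|: A); last by rewrite -subDset.
    by rewrite inE; apply/orP; right; exact: imset_f.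
  move=> [X]; rewrite !inE => /orP [/andP [an /eqP ->] CH | /imsetP [A AL ->] CA].
    by rewrite (subset_trans CH) ?subsetUr //= an CH.
  apply/andP; split; first exact: (subset_trans CA (setUS Sj (L'P A AL).1)).
  apply/orP; right; apply/exists_inP; exists A => //; by rewrite subDset.
split.
  exists L; split => //.
  - case an: (a != [::]).
      by apply/set0Pn; exists H; rewrite !inE an eqxx.
    have qn : q != [::].
      by move: hne; move/negbFE/eqP: an => ->; apply: contra => /eqP ->.
    have [A AL] := set0Pn _ (L'n qn).
    by apply/set0Pn; exists (Sj :|: A); rewrite inE; apply/orP; right; exact: imset_f.
  - move=> X; rewrite !inE => /orP [/andP [_ /eqP ->] | /imsetP [A AL ->]].
      by rewrite subsetUr cardU_dis // cS addnC.
    case: (L'P A AL) => AH cA; split; first exact: setUS.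
    rewrite !cardU_dis //; last exact: disjointWr AH dSH.
    lia.
move=> c1 sg tau sF tF st.
have dBS : forall B, B \in Gam' -> [disjoint B & Sj].
  move=> B; rewrite in_gam => /andP [BH _]; rewrite disjoint_sym; exact: disjointWr BH dSH.
have lift : forall A, A \in L' -> Sj :|: A \in facets (gen_seq [:: F] :&: gen_seq (a ++ [seq Sj :|: G | G : {set T} <- q])) ->
    A \in facets Gam'.
  move=> A AL /facetsP [SG smax]; apply/facetsP; split.
    by rewrite /Gam' GE'; apply/in_gen_set; exists A.
  move=> B BG AB.
  have SB : Sj :|: B \in gen_seq [:: F] :&: gen_seq (a ++ [seq Sj :|: G | G : {set T} <- q]).
    rewrite memG setUS /=; last by move: BG; rewrite in_gam => /andP [].
    by rewrite setUDl' ?BG ?orbT // dBS.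
  have := smax _ SB (setUS Sj AB) => E.
  have AG : A \in Gam' by rewrite /Gam' GE'; apply/in_gen_set; exists A.
  by rewrite -(setUDl' (dBS _ BG)) E setUDl' // dBS.
have sL : sg \in L by apply: facets_gen_set; rewrite -GE.
have tL : tau \in L by apply: facets_gen_set; rewrite -GE.
move: sL tL; rewrite !inE => /orP [/andP [_ /eqP sH] | /imsetP [A AL sA]] /orP [/andP [_ /eqP tH] | /imsetP [A' AL' tA]].
- by move: st; rewrite sH tH eqxx.
- rewrite sH tA; apply/subsetP => x; rewrite !inE; case/orP => ->; by rewrite ?orbT.
- rewrite tH sA; apply/subsetP => x; rewrite !inE; case/orP => ->; by rewrite ?orbT.
have AA : A != A' by apply: contra st => /eqP AA; rewrite sA tA AA.
have fA := lift _ AL (eq_ind _ (fun z => z \in _) sF _ sA).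
have fA' := lift _ AL' (eq_ind _ (fun z => z \in _) tF _ tA).
have c1' : (1 < #|facets Gam'|)%N by apply/card_gt1P; exists A, A'.
have /subsetP HA := Hii' c1' _ _ fA fA' AA.
rewrite sA tA; apply/subsetP => x; rewrite !inE; case/orP => [-> //|xH].
by move: (HA x xH); rewrite !inE; case/orP => ->; rewrite ?orbT.
Qed.

End Extend.

Section Seqs.
Variable T : finType.

Lemma shellseq_filtermap k (Si : {set T}) s :
  #|Si| = k -> (0 < k)%N -> shellseq k s ->
  shellseq k [seq G :\: Si | G : {set T} <- [seq G : {set T} <- s | Si \subset G]].
Proof.
move=> cS k0; elim/last_ind: s => [|s F IH]; first by move=> _; exact: shellseq_nil.
case/shellseq_rcons => Hs HF; rewrite filter_rcons; case: ifP => SiF; last exact: IH.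
rewrite map_rcons; apply/shellseq_rcons; split; first exact: IH.
move=> ne.
have hs : has (fun G : {set T} => Si \subset G) s.
  by rewrite has_filter; apply: contra ne => /eqP ->.
apply: cond_restrict => //; apply: HF.
by apply: contraTneq hs => ->.
Qed.

Lemma shellseq_catmap k (a : seq {set T}) (f : {set T} -> {set T}) b :
  shellseq k a ->
  (forall q H r, b = q ++ H :: r -> a ++ map f q != [::] -> Cond k (f H) (a ++ map f q)) ->
  shellseq k (a ++ map f b).
Proof.
move=> ha; elim/last_ind: b => [|b x IH] hb; first by rewrite cats0.
rewrite map_rcons -rcons_cat; apply/shellseq_rcons; split.
  apply: IH => q H r bE; apply: hb; by rewrite bE rcons_cat rcons_cons.
by move=> ne; apply: (hb b x [::]) ne; rewrite cats1.
Qed.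

End Seqs.

Section Graph.
Variables (T : finType) (e : rel T).
Hypotheses (e_sym : symmetric e) (e_irr : irreflexive e).
Variables (k : nat) (S1 : {set T}) (P : {set {set T}}).
Hypothesis hP : ksimplicial_parts e k S1 P.
Hypothesis S1P : S1 \in P.
Implicit Types (B C F G H V : {set T}) (x y z : T).

Lemma indepP (F : {set T}) : reflect (forall x y, x \in F -> y \in F -> ~~ e x y) (indep e F).
Proof.
rewrite /indep; apply: (iffP forall_inP) => H.
  by move=> x y xF yF; exact: (forall_inP (H x xF) y yF).
by move=> x xF; apply/forall_inP => y yF; exact: H.
Qed.

Lemma indep_sub (A B : {set T}) : A \subset B -> indep e B -> indep e A.
Proof.
move=> AB /indepP iB; apply/indepP => x y xA yA; apply: iB; exact: (subsetP AB).
Qed.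

Lemma in_ind V (F : {set T}) : (F \in indcomplex e V) = (F \subset V) && indep e F.
Proof. by rewrite inE. Qed.

Lemma partP : partition P (closedN e S1). Proof. by case: hP. Qed.
Lemma triv : trivIset P. Proof. by case/and3P: partP. Qed.
Lemma coverE : cover P = closedN e S1. Proof. by case/and3P: partP => /eqP. Qed.
Lemma set0_notin : set0 \notin P. Proof. by case/and3P: partP. Qed.

Lemma part_sub B : B \in P -> B \subset closedN e S1.
Proof. by move=> BP; rewrite -coverE; exact: bigcup_sup. Qed.

Lemma part_n0 B : B \in P -> exists x, x \in B.
Proof.
move=> BP; apply/set0Pn; apply: contraNneq set0_notin => <-; exact: BP.
Qed.

Lemma part_card B : B \in P -> #|B| = k.
Proof. by case: hP => _ _ H _ _; exact: H. Qed.

Lemma part_indep B x y : B \in P -> x \in B -> y \in B -> ~~ e x y.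
Proof.
move=> BP xB yB; case: hP => _ _ _ H _.
rewrite H; last exact: (subsetP (part_sub BP)).
  by rewrite (def_pblock triv BP xB) (def_pblock triv BP yB) eqxx.
exact: (subsetP (part_sub BP)).
Qed.

Lemma sameN_e B x y z : B \in P -> x \in B -> y \in B -> e x z = e y z.
Proof.
move=> BP xB yB; case: hP => _ _ _ _ H.
by have := H B x y BP xB yB => /setP /(_ z); rewrite !inE.
Qed.

Lemma sub_closedN B : B \subset closedN e B.
Proof. by apply/subsetP => x xB; rewrite inE; apply/exists_inP; exists x => //; rewrite eqxx. Qed.

Lemma closedN_part B x0 y : B \in P -> x0 \in B -> y \in closedN e B -> (y \in B) \/ e x0 y.
Proof.
move=> BP x0B; rewrite inE => /exists_inP [x xB /orP [/eqP <-|exy]]; first by left.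
by right; rewrite (sameN_e _ BP x0B xB).
Qed.

Lemma nbr_closedN B x y : x \in B -> e x y -> y \in closedN e B.
Proof. by move=> xB exy; rewrite inE; apply/exists_inP; exists x => //; rewrite exy orbT. Qed.

Lemma indep_union B H : B \in P -> H \subset ~: closedN e B -> indep e H -> indep e (B :|: H).
Proof.
move=> BP HV /indepP iH; apply/indepP => u v; rewrite !inE => /orP [uB|uH] /orP [vB|vH].
- exact: part_indep BP uB vB.
- apply/negP => euv; have := subsetP HV v vH; by rewrite inE (nbr_closedN uB euv).
- rewrite e_sym; apply/negP => evu; have := subsetP HV u uH; by rewrite inE (nbr_closedN vB evu).
- exact: iH.
Qed.

Local Notation DG := (indcomplex e [set: T]).
Local Notation Di B := (indcomplex e (~: closedN e B)).

Lemma facet_part F B x : F \in facets DG -> B \in P -> x \in B -> x \in F -> B \subset F.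
Proof.
case/facetsP => FD Fmax BP xB xF; move: (FD); rewrite in_ind => /andP [_ /indepP iF].
apply/subsetP => y yB.
have yFD : y |: F \in DG.
  rewrite in_ind subsetT /=; apply/indepP => u v; rewrite !inE.
  move=> /orP [/eqP->|uF] /orP [/eqP->|vF].
  - by rewrite e_irr.
  - by rewrite -(sameN_e _ BP xB yB); exact: iF.
  - by rewrite e_sym -(sameN_e _ BP xB yB); exact: iF.
  - exact: iF.
have := Fmax _ yFD (subsetUr _ _) => <-.
by rewrite setU11.
Qed.

Lemma facet_has_part F : F \in facets DG -> exists2 B, B \in P & B \subset F.
Proof.
move=> Ff; case: (boolP [exists z in F, z \in closedN e S1]).
  case/exists_inP => z zF; rewrite -coverE => zN.
  exists (pblock P z); first exact: pblock_mem.
  by apply: facet_part Ff (pblock_mem zN) _ zF; rewrite mem_pblock.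
move/exists_inPn => hn; have [x xS1] := part_n0 S1P.
have xN : x \in closedN e S1 := subsetP (sub_closedN S1) x xS1.
case/facetsP: Ff => FD Fmax; move: (FD); rewrite in_ind => /andP [_ /indepP iF].
have xFD : x |: F \in DG.
  rewrite in_ind subsetT /=; apply/indepP => u v; rewrite !inE.
  move=> /orP [/eqP->|uF] /orP [/eqP->|vF].
  - by rewrite e_irr.
  - by apply/negP => exv; have := hn v vF; rewrite (nbr_closedN xS1 exv).
  - by rewrite e_sym; apply/negP => exv; have := hn u uF; rewrite (nbr_closedN xS1 exv).
  - exact: iF.
have := Fmax _ xFD (subsetUr _ _) => E.
have : x \in F by rewrite -E setU11.
by move/hn; rewrite xN.
Qed.

Lemma facet_lift B H : B \in P -> H \in facets (Di B) -> B :|: H \in facets DG.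
Proof.
move=> BP /facetsP [HD Hmax]; move: (HD); rewrite in_ind => /andP [HV iH].
apply/facetsP; split; first by rewrite in_ind subsetT indep_union.
move=> G; rewrite in_ind => /andP [_ iG] BHG.
apply/eqP; rewrite eqEsubset BHG andbT; apply/subsetP => y yG.
have [x0 x0B] := part_n0 BP.
case: (boolP (y \in closedN e B)) => yN.
  case: (closedN_part BP x0B yN) => [yB|exy]; first by rewrite inE yB.
  have x0G : x0 \in G by apply: (subsetP BHG); rewrite inE x0B.
  by move/indepP: iG => /(_ x0 y x0G yG); rewrite exy.
have GV : G :&: ~: closedN e B \in Di B.
  by rewrite in_ind subsetIr (indep_sub (subsetIl _ _) iG).
have HG' : H \subset G :&: ~: closedN e B.
  by rewrite subsetI HV (subset_trans (subsetUr B H) BHG).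
have := Hmax _ GV HG' => E.
have : y \in H by rewrite -E inE yG inE yN.
by rewrite inE => ->; rewrite orbT.
Qed.

Lemma facet_restrict B F : B \in P -> F \in facets DG -> B \subset F -> F :\: B \in facets (Di B).
Proof.
move=> BP /facetsP [FD Fmax] BF; move: (FD); rewrite in_ind => /andP [_ iF].
have [x0 x0B] := part_n0 BP.
have HV : F :\: B \subset ~: closedN e B.
  apply/subsetP => y; rewrite in_setD in_setC => /andP [yB yF]; apply/negP => yN.
  case: (closedN_part BP x0B yN) => [yB'|exy]; first by rewrite yB' in yB.
  by move/indepP: iF => /(_ x0 y (subsetP BF x0 x0B) yF); rewrite exy.
apply/facetsP; split; first by rewrite in_ind HV (indep_sub (subsetDl _ _) iF).
move=> G; rewrite in_ind => /andP [GV iG] HG.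
have BG : B :|: G \in DG by rewrite in_ind subsetT indep_union.
have FBG : F \subset B :|: G.
  apply/subsetP => y yF; rewrite inE; case: (boolP (y \in B)) => //= yB.
  by apply: (subsetP HG); rewrite inE yB yF.
have E := Fmax _ BG FBG.
apply/eqP; rewrite eqEsubset HG andbT; apply/subsetP => y yG; rewrite inE; apply/andP; split.
  apply/negP => yB; have := subsetP GV y yG; by rewrite inE (subsetP (sub_closedN B) y yB).
by rewrite -E inE yG orbT.
Qed.

Lemma facetDi_disj B H : H \in facets (Di B) -> [disjoint B & H].
Proof.
case/facetsP => HD _; move: HD; rewrite in_ind => /andP [HV _].
rewrite -setI_eq0; apply/eqP/setP => x; rewrite in_setI in_set0; apply/negbTE/negP => /andP [xB xH]; have := subsetP HV x xH.
by rewrite inE (subsetP (sub_closedN B) x xB).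
Qed.

Lemma facet_unique F B C x y : indep e F -> B \in P -> C \in P -> x \in B -> x \in F ->
  y \in C -> y \in F -> B = C.
Proof.
move=> iF BP CP xB xF yC yF.
have xN := subsetP (part_sub BP) x xB; have yN := subsetP (part_sub CP) y yC.
case: hP => _ _ _ H _.
have := H x y xN yN; rewrite (def_pblock triv BP xB) (def_pblock triv CP yC) => E.
have := indepP _ iF x y xF yF; rewrite E => /negbNE/eqP; done.
Qed.

Lemma facet_S1 B H : B \in P -> H \in facets (Di B) ->
  exists2 F, F \in facets DG & (S1 \subset F) && (H \subset F).
Proof.
move=> BP Hf; have dBH := facetDi_disj Hf.
case/facetsP: Hf => HD _; move: HD; rewrite in_ind => /andP [HV iH].
have iBH : indep e (B :|: H) by apply: indep_union.
have noS1 : forall z, z \in H -> z \notin closedN e S1.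
  move=> z zH; apply/negP; rewrite -coverE => zN.
  have CP := pblock_mem zN; have zC : z \in pblock P z by rewrite mem_pblock.
  have [x0 x0B] := part_n0 BP.
  have x0BH : x0 \in B :|: H by rewrite inE x0B.
  have zBH : z \in B :|: H by rewrite inE zH orbT.
  have E := facet_unique iBH BP CP x0B x0BH zC zBH.
  have zB : z \in B by rewrite E.
  by move: (disjointFr dBH zB); rewrite zH.
have HV1 : H \subset ~: closedN e S1 by apply/subsetP => z zH; rewrite in_setC noS1.
have iSH : indep e (S1 :|: H) := indep_union S1P HV1 iH.
have SHD : S1 :|: H \in DG by rewrite in_ind subsetT iSH.
have [F Ff SF] := facet_exists SHD.
by exists F => //; rewrite -subUset.
Qed.

Lemma memmap B sB : B \in P -> [set H in sB] = facets (Di B) ->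
  forall F, (F \in [seq B :|: H | H <- sB]) = (F \in facets DG) && (B \subset F).
Proof.
move=> BP sD F; apply/mapP/andP => [[H Hs ->]|[Ff BF]].
  have Hf : H \in facets (Di B) by rewrite -sD inE.
  by split; [exact: facet_lift | exact: subsetUl].
exists (F :\: B); first by have := facet_restrict BP Ff BF; rewrite -sD inE.
by rewrite setUDK'.
Qed.

Lemma uniqmap B sB : [set H in sB] = facets (Di B) -> uniq sB -> uniq [seq B :|: H | H <- sB].
Proof.
move=> sD us; rewrite map_inj_in_uniq // => H1 H2 H1s H2s E.
have d1 : [disjoint H1 & B] by rewrite disjoint_sym; apply: facetDi_disj; rewrite -sD inE.
have d2 : [disjoint H2 & B] by rewrite disjoint_sym; apply: facetDi_disj; rewrite -sD inE.
by rewrite -(setUDl' d1) E setUDl'.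
Qed.

Lemma forward Si : kshellable_graph k e [set: T] -> Si \in P ->
  kshellable_graph k e (~: closedN e Si).
Proof.
rewrite /kshellable_graph !kshellableE => -[k1 [s [us sD shs]]] SiP; split => //.
exists [seq G :\: Si | G : {set T} <- [seq G : {set T} <- s | Si \subset G]]; split.
- rewrite map_inj_in_uniq ?filter_uniq // => F1 F2; rewrite !mem_filter.
  move=> /andP [S1F _] /andP [S2F _] E.
  by rewrite -(setUDK' S1F) E setUDK'.
- apply/setP => H; rewrite inE; apply/mapP/idP => [[F]|Hf].
    rewrite mem_filter => /andP [SiF Fs] ->.
    have Ff : F \in facets DG by rewrite -sD inE.
    exact: facet_restrict.
  exists (Si :|: H).
    rewrite mem_filter subsetUl /=.
    by have := facet_lift SiP Hf; rewrite -sD inE.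
  by rewrite setUDl' // disjoint_sym facetDi_disj.
- apply: shellseq_filtermap => //; exact: part_card.
Qed.

Lemma backward : (forall Si, Si \in P -> kshellable_graph k e (~: closedN e Si)) ->
  kshellable_graph k e [set: T].
Proof.
move=> hall.
have [k1 _] : (1 <= k)%N /\ _ := (kshellableE _ _).1 (hall S1 S1P).
have k0 : (0 < k)%N by [].
have claim : forall l : seq {set T}, uniq l -> all (fun B => B \in P :\ S1) l ->
  exists s, [/\ uniq s, shellseq k s, s != [::] &
    forall F, (F \in s) = (F \in facets DG) && ((S1 \subset F) || has (fun B : {set T} => B \subset F) l)].
  elim/last_ind => [|l Sj IH].
    move=> _ _.
    have [_ [s1 [us1 s1D shs1]]] := (kshellableE _ _).1 (hall S1 S1P).
    exists [seq S1 :|: H | H <- s1]; split.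
    + exact: uniqmap.
    + have := @shellseq_catmap _ k [::] (fun H => S1 :|: H) s1 (@shellseq_nil _ k); apply => q H r s1E ne.
      have Hf : H \in facets (Di S1) by rewrite -s1D inE s1E mem_cat inE eqxx orbT.
      apply: cond_extend => //.
      * exact: part_card.
      * exact: facetDi_disj.
      * by move=> ne'; exact: (shs1 q H r s1E ne').
    + have s0 : (set0 : {set T}) \in Di S1.
        by rewrite in_ind sub0set; apply/indepP => x y; rewrite inE.
      have [F0 F0f _] := facet_exists s0.
      move: F0f; rewrite -s1D inE; case: (s1) => //.
    + by move=> F; rewrite (memmap S1P s1D) orbF.
  rewrite rcons_uniq all_rcons => /andP [Sjl ul] /andP [SjP al].
  have [s [us shs sn memS]] := IH ul al.
  move: SjP; rewrite in_setD1 => /andP [SjS1 SjP].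
  have [_ [sj [usj sjD shsj]]] := (kshellableE _ _).1 (hall Sj SjP).
  have hpart : forall G, G \in s -> exists2 B, B \in P & (B != Sj) && (B \subset G).
    move=> G; rewrite memS => /andP [_ /orP [S1G|/hasP [B Bl BG]]].
      by exists S1 => //; rewrite eq_sym SjS1 S1G.
    have := allP al B Bl; rewrite in_setD1 => /andP [_ BP].
    exists B => //; rewrite BG andbT; apply: contraNneq Sjl => <-; exact: Bl.
  have hdis : forall G, G \in s -> [disjoint Sj & G].
    move=> G Gs; have [B BP /andP [BSj BG]] := hpart G Gs.
    have Gf : G \in facets DG by move: Gs; rewrite memS => /andP [].
    case/facetsP: Gf => GD _; move: GD; rewrite in_ind => /andP [_ iG].
    rewrite -setI_eq0; apply/eqP/setP => x; rewrite in_setI in_set0.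
    apply/negbTE/negP => /andP [xSj xG].
    have [y yB] := part_n0 BP.
    have E := facet_unique iG BP SjP yB (subsetP BG y yB) xSj xG.
    by rewrite E eqxx in BSj.
  exists (s ++ [seq Sj :|: H | H <- sj]); split.
  + rewrite cat_uniq us uniqmap //= andbT; apply/hasPn => F /mapP [H Hs ->].
    apply/negP => inS; have [x xSj] := part_n0 SjP.
    by move: (disjointFr (hdis _ inS) xSj); rewrite inE xSj.
  + apply: shellseq_catmap => // q H r sjE ne.
    have Hf : H \in facets (Di Sj) by rewrite -sjD inE sjE mem_cat inE eqxx orbT.
    apply: cond_extend => //.
    * exact: part_card.
    * exact: facetDi_disj.
    * move=> _; have [F Ff /andP [S1F HF]] := facet_S1 SjP Hf.
      by apply/hasP; exists F => //; rewrite memS Ff S1F.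
    * by move=> ne'; exact: (shsj q H r sjE ne').
  + by move: sn; apply: contra => /eqP; case: (s).
  + move=> F; rewrite mem_cat memS (memmap SjP sjD) has_rcons.
    by case: (F \in facets DG); case: (S1 \subset F); case: (Sj \subset F); case: (has _ l); rewrite /= ?orbT ?orbF.
have al : all (fun B => B \in P :\ S1) (enum (P :\ S1)) by apply/allP => B; rewrite mem_enum.
have [s [us shs _ memS]] := claim (enum (P :\ S1)) (enum_uniq _) al.
rewrite /kshellable_graph kshellableE; split => //; exists s; split => //.
apply/setP => F; rewrite inE memS; apply/andP/idP => [[]//|Ff]; split => //.
have [B BP BF] := facet_has_part Ff.
case: (eqVneq B S1) => [<-|BS1]; first by rewrite BF.
by apply/orP; right; apply/hasP; exists B => //; rewrite mem_enum in_setD1 BS1.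
Qed.

End Graph.

Theorem theorem4p7 (T : finType) (e : rel T) (e_sym : symmetric e)
    (e_irr : irreflexive e) (k : nat) (S1 : {set T}) (P : {set {set T}}) :
  ksimplicial_parts e k S1 P -> S1 \in P ->
  kshellable_graph k e [set: T] <->
  (forall Si, Si \in P -> kshellable_graph k e (~: closedN e Si)).
Proof.
move=> hP S1P; split.
  by move=> hG Si SiP; exact: (forward e_sym hP hG SiP).
exact: (backward e_sym e_irr hP S1P).
Qed.
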